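(* For all integers $j\ge1$ and $k\ge0$, $$\sum_{i=0}^k(-1)^i\binom{k}{i}\binom{i/2}{j}=(-1)^j2^{k-2j}\frac{k}{j}\binom{2j-k-1}{j-k}.$$ (Moreover, for $j=k=0$ the sum equals $1$.)
   Context: For real $x$ and integer $m$: $\binom{x}{m}=x(x-1)\cdots(x-m+1)/m!$ if $m\ge1$, $\binom{x}{0}=1$, and $\binom{x}{m}=0$ if $m<0$. *)

(* Defs.v *)
From mathcomp Require Import all_boot all_order all_algebra.
Set Implicit Arguments. Unset Strict Implicit. Unset Printing Implicit Defensive.
Import Order.TTheory GRing.Theory Num.Theory.
Local Open Scope ring_scope.

Definition gbinom (R : fieldType) (x : R) (m : int) : R :=
  match m with
  | Posz n => (\prod_(i < n) (x - i%:R)) / (n`!)%:R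
  | Negz _ => 0
  end.

(* Main.v *)
Require Import Defs.
From mathcomp Require Import all_boot all_order all_algebra.
From mathcomp Require Import ring lra zify.
Import Order.TTheory GRing.Theory Num.Theory.
Local Open Scope ring_scope.

Section S.
Variable R : realFieldType.

Definition P (x : R) n := \prod_(i < n) (x - i%:R).
Definition gb (x : R) n := P x n / (n`!)%:R.
Definition D k (f : nat -> R) := \sum_(i < k.+1) (-1) ^+ i * ('C(k, i))%:R * f i.

Lemma gbE x n : gbinom x (Posz n) = gb x n.
Proof. by []. Qed.

Lemma fact_neq0 n : (n`!)%:R != 0 :> R.
Proof. by rewrite pnatr_eq0 -lt0n fact_gt0. Qed.

Lemma PS x n : P x n.+1 = P x n * (x - n%:R).
Proof. by rewrite /P big_ord_recr. Qed.

Lemma PS1 x n : P (x + 1) n.+1 = (x + 1) * P x n.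
Proof.
rewrite /P big_ord_recl subr0; congr (_ * _); apply: eq_bigr => i _.
by rewrite /bump /= natrD addrKA.
Qed.

Lemma gbS x n : gb x n.+1 = gb x n * (x - n%:R) / n.+1%:R.
Proof.
rewrite /gb PS factS natrM invfM; have h := fact_neq0 n.
have h2 : n.+1%:R != 0 :> R by rewrite pnatr_eq0.
have h3 : 1 + n%:R != 0 :> R by rewrite addrC natr1 pnatr_eq0.
by field; rewrite h h3.
Qed.

Lemma gbPascal x n : gb (x + 1) n.+1 = gb x n.+1 + gb x n.
Proof.
rewrite {1}/gb PS1 gbS /gb factS natrM invfM.
have h1 := fact_neq0 n; have h3 : 1 + n%:R != 0 :> R by rewrite addrC natr1 pnatr_eq0.
by field; rewrite h1 h3.
Qed.

Lemma gb0 x : gb x 0 = 1.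
Proof. by rewrite /gb /P big_ord0 divr1. Qed.

Lemma gb_zero n : gb 0 n.+1 = 0.
Proof. by rewrite /gb /P big_ord_recl subrr mul0r mul0r. Qed.


Lemma DS k f : D k.+1 f = D k f - D k (fun i => f i.+1).
Proof.
rewrite /D big_ord_recl [in RHS]big_ord_recl.
have E : \sum_(i < k.+1) (-1) ^+ (i.+1) * ('C(k, i.+1))%:R * f i.+1
  = \sum_(i < k) (-1) ^+ (i.+1) * ('C(k, i.+1))%:R * f i.+1.
  by rewrite big_ord_recr /= bin_small // mulr0 mul0r addr0.
rewrite -E.
have E2 : forall i : 'I_k.+1, (-1) ^+ (lift ord0 i) * ('C(k.+1, lift ord0 i))%:R * f (lift ord0 i)
  = (-1) ^+ (i.+1) * ('C(k, i.+1))%:R * f i.+1 - (-1) ^+ i * ('C(k, i))%:R * f i.+1.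
  move=> i; rewrite /= /bump /= add1n binS natrD exprS; ring.
rewrite (eq_bigr _ (fun i _ => E2 i)) sumrB.
have E3 : forall i : 'I_k, (-1) ^+ (lift ord0 i) * ('C(k, lift ord0 i))%:R * f (lift ord0 i)
  = (-1) ^+ (i.+1) * ('C(k, i.+1))%:R * f i.+1.
  by move=> i; rewrite /= /bump /= add1n.
by rewrite /= !expr0 !bin0 !mul1r addrA.
Qed.

Lemma D_ext k f g : (forall i, f i = g i) -> D k f = D k g.
Proof. by move=> h; rewrite /D; apply: eq_bigr => i _; rewrite h. Qed.

Lemma DD k f g : D k (fun i => f i + g i) = D k f + D k g.
Proof. by rewrite /D -big_split /=; apply: eq_bigr => i _; rewrite mulrDr. Qed.

Lemma DSS k f g : (forall i, f i.+2 = f i + g i) ->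
  D k.+2 f = 2 * D k.+1 f + D k g.
Proof.
move=> h; rewrite DS (DS k (fun i => f i.+1)) (D_ext k _ _ h) DD.
have := DS k f; set a := D k (fun i => f i.+1) => e.
have -> : a = D k f - D k.+1 f by rewrite e; ring.
ring.
Qed.

Lemma Dconst k : D k (fun _ => 1) = (k == 0%N)%:R.
Proof.
case: k => [|k]; first by rewrite /D big_ord1 /= expr0 bin0 !mul1r.
by rewrite DS subrr.
Qed.


Definition a j k := D k (fun i => gb (i%:R / 2) j).

Lemma a_rec j k : a j.+1 k.+2 = 2 * a j.+1 k.+1 + a j k.
Proof.
apply: DSS => i; rewrite -gbPascal; congr gb.
rewrite -addn2 natrD mulrDl divff //; by rewrite pnatr_eq0.
Qed.

Lemma a0 k : a 0 k = (k == 0%N)%:R.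
Proof. by rewrite /a -Dconst; apply: D_ext => i; rewrite gb0. Qed.

Lemma a_k0 j : a j.+1 0 = 0.
Proof. by rewrite /a /D big_ord1 /= mul0r gb_zero mulr0. Qed.

Lemma a_k1 j : a j.+1 1 = - gb (1 / 2) j.+1.
Proof.
rewrite /a /D big_ord_recr big_ord1 /= mul0r gb_zero mulr0 add0r.
by rewrite expr1 binn mulr1 mulN1r.
Qed.

Definition M j k : R := if (k <= j)%N then ('C(2 * j - k - 1, j - 1)%N)%:R - ('C(2 * j - k - 1, j)%N)%:R else 0.
Definition c j k : R := (-1) ^+ j * 2 ^+ k / 4 ^+ j * M j k.

Lemma M_k0 j : M j.+1 0 = 0.
Proof.
rewrite /M leq0n subn0.
have -> : (2 * j.+1 - 1 = (2 * j).+1)%N by lia.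
rewrite subSS subn0 -(bin_sub (n := (2 * j).+1) (m := j)); last lia.
have -> : ((2 * j).+1 - j = j.+1)%N by lia.
by rewrite subrr.
Qed.

Lemma Mrec j k : M j.+2 k.+2 = M j.+2 k.+1 - M j.+1 k.
Proof.
rewrite /M.
case: (ltngtP k j.+1) => hk.
- rewrite !ifT; try lia.
  have -> : (2 * j.+2 - k.+2 - 1 = (2 * j - k).+1)%N by lia.
  have -> : (2 * j.+2 - k.+1 - 1 = (2 * j - k).+2)%N by lia.
  have -> : (2 * j.+1 - k - 1 = (2 * j - k).+1)%N by lia.
  rewrite !subSS !subn0 (binS _ j.+1) (binS _ j) !natrD; ring.
- rewrite !ifF; try lia. by rewrite subrr.
- subst k. rewrite ifF; last lia. rewrite !ifT; try lia.
  have -> : (2 * j.+2 - j.+2 - 1 = j.+1)%N by lia.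
  have -> : (2 * j.+1 - j.+1 - 1 = j)%N by lia.
  rewrite !subSS !subn0 !binn !bin_small //. by rewrite !subr0 subrr.
Qed.


Lemma cat_rec j : (j.+1 * 'C(2 * j.+1, j.+1) = 2 * (2 * j).+1 * 'C(2 * j, j))%N.
Proof.
have h1 := mul_bin_diag (2 * j).+2 j.
have h2 := mul_bin_diag (2 * j).+1 j.
have h3 : 'C((2 * j).+1, j.+1) = 'C((2 * j).+1, j).
  rewrite -(bin_sub (n := (2 * j).+1) (m := j)); last lia.
  by have -> : ((2 * j).+1 - j = j.+1)%N by lia.
simpl in h1, h2.
have -> : (2 * j.+1 = (2 * j).+2)%N by lia.
rewrite -h1; rewrite h3 in h2; rewrite -mulnA h2; lia.
Qed.

Lemma nzpos (x c : R) : 0 < c -> 0 <= x -> c + x != 0.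
Proof. by move=> h1 h2; apply/negP => /eqP e; lra. Qed.

Lemma nzn (j : nat) c : 0 < c -> c + j%:R != 0 :> R.
Proof. by move=> h; apply: nzpos => //; rewrite ler0n. Qed.

Lemma natS' n : (n.+1%:R : R) = n%:R + 1.
Proof. by rewrite -addn1 natrD. Qed.

Lemma gb_half j : gb (1 / 2) j.+1 = (-1) ^+ j * 2 / 4 ^+ j.+1 * (('C(2 * j, j))%:R / j.+1%:R).
Proof.
elim: j => [|j IH].
  by rewrite gbS gb0 /= bin0 expr0 expr1; field.
rewrite gbS IH.
have e : ('C(2 * j.+1, j.+1))%:R = (2 * (2 * j).+1 * 'C(2 * j, j))%:R / j.+1%:R :> R.
  by rewrite -cat_rec natrM; field; rewrite nzn.
rewrite e !natrM !natS' natrM.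
have h4 : 4 ^+ j != 0 :> R by rewrite expf_neq0 // pnatr_eq0.
rewrite !exprS.
have hn : 0 <= j%:R :> R by rewrite ler0n.
field; apply/and3P; split; try (apply: expf_neq0); apply/negP => /eqP; lra.
Qed.


Lemma M_k1 j : M j.+1 1 = ('C(2 * j, j))%:R / j.+1%:R.
Proof.
rewrite /M ltn0Sn.
have -> : (2 * j.+1 - 1 - 1 = 2 * j)%N by lia.
rewrite subSS subn0.
have h := mul_bin_left (2 * j) j.
rewrite (_ : (2 * j - j = j)%N) in h; last lia.
have e : ('C(2 * j, j.+1))%:R = (j * 'C(2 * j, j))%:R / j.+1%:R :> R.
  by rewrite -h natrM; field; rewrite nzn.
by rewrite e natrM; field; rewrite nzn.
Qed.

Lemma c_k1 j : c j.+1 1 = - gb (1 / 2) j.+1.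
Proof.
rewrite /c M_k1 gb_half exprS expr1; field.
by apply/andP; split; [rewrite nzn | apply: expf_neq0; apply/negP => /eqP; lra].
Qed.

Lemma c_k0 j : c j.+1 0 = 0.
Proof. by rewrite /c M_k0 mulr0. Qed.

Lemma c_rec j k : c j.+2 k.+2 = 2 * c j.+2 k.+1 + c j.+1 k.
Proof.
rewrite /c Mrec !exprS.
have h4 : 4 ^+ j != 0 :> R by apply: expf_neq0; apply/negP => /eqP; lra.
field. by rewrite h4.
Qed.

Lemma c1_rec k : c 1 k.+2 = 2 * c 1 k.+1 + (k == 0%N)%:R.
Proof.
rewrite /c /M.
case: k => [|k].
  rewrite (_ : (2 * 1 - 1 - 1 = 0)%N) // subnn bin0 bin_small // !expr1 /=.
  by field.
rewrite (_ : (k.+2 < 1)%N = false) // (_ : (k.+1 < 1)%N = false) //.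
by rewrite !mulr0 addr0.
Qed.

Lemma main k : forall j, a j.+1 k = c j.+1 k /\ a j.+1 k.+1 = c j.+1 k.+1.
Proof.
elim: k => [|k IH] j.
  by rewrite a_k0 c_k0 a_k1 c_k1.
split; first by case: (IH j).
rewrite a_rec; case: j => [|j].
  by rewrite a0 c1_rec (proj2 (IH 0%N)).
by rewrite c_rec (proj2 (IH j.+1)) (proj1 (IH j)).
Qed.


Lemma P_nat n m : P (n%:R) m = (n ^_ m)%:R.
Proof.
elim: m => [|m IH]; first by rewrite /P big_ord0 ffactn0.
rewrite PS IH ffactnSr natrM.
case: (leqP m n) => h; first by rewrite natrB.
by rewrite !ffact_small // !mulr0n !mul0r.
Qed.

Lemma gb_nat n m : gb (n%:R) m = ('C(n, m))%:R.
Proof. by rewrite /gb P_nat -bin_ffact natrM mulfK // fact_neq0. Qed.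

End S.

Theorem mainTheorem3 (R : realFieldType) :
  (forall j k : nat, (1 <= j)%N ->
    \sum_(i < k.+1) (-1) ^+ i * ('C(k, i))%:R * gbinom ((i%:R : R) / 2) (Posz j)
    = (-1) ^+ j * (2 : R) ^ (Posz k - 2 * Posz j) * (k%:R / j%:R)
      * gbinom ((2 * Posz j - Posz k - 1)%:~R) (Posz j - Posz k))
  /\
  \sum_(i < 1) (-1) ^+ i * ('C(0, i))%:R * gbinom ((i%:R : R) / 2) (Posz 0) = 1.
Proof.
split; last first.
  by rewrite big_ord1 /= expr0 bin0 !mul1r big_ord0 divr1.
move=> j k; case: j => [//|j] _.
transitivity (a R j.+1 k); first by [].
rewrite (proj1 (main R k j)) /c.
have hp : (2:R) ^ (Posz k - 2 * Posz j.+1) = 2 ^+ k / 4 ^+ j.+1.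
  rewrite (_ : Posz k - 2 * Posz j.+1 = Posz k + - Posz (2 * j.+1)%N); last by lia.
  rewrite expfzDr; last by apply/negP => /eqP; lra.
  rewrite -invr_expz.
  change ((2:R) ^ (Posz k)) with ((2:R)^+k).
  change ((2:R) ^ (Posz (2*j.+1)%N)) with ((2:R) ^+ (2*j.+1)).
  rewrite exprM (_ : (2:R) ^+ 2 = 4) //.
  rewrite expr2; lra.
rewrite hp /M.
case: (leqP k j.+1) => hk.
  rewrite (_ : (2 * Posz j.+1 - Posz k - 1) = Posz (2 * j.+1 - k - 1)%N); last by lia.
  rewrite subzn // gbE.
  rewrite (_ : ((Posz (2 * j.+1 - k - 1)%N)%:~R : R) = (2 * j.+1 - k - 1)%N%:R) //.
  rewrite gb_nat subSS subn0.
  set n := (2 * j.+1 - k - 1)%N.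
  have h := mul_bin_left n j.
  rewrite (_ : (n - j = j.+1 - k)%N) in h; last by rewrite /n; lia.
  have e1 : 'C(n, j.+1 - k) = 'C(n, j).
    rewrite -(bin_sub (n := n) (m := j)); last by rewrite /n; lia.
    by rewrite (_ : (n - j = j.+1 - k)%N) // /n; lia.
  have e2 : ('C(n, j.+1))%:R = (j.+1%:R - k%:R) * ('C(n, j))%:R / j.+1%:R :> R.
    by rewrite -natrB // -natrM -h natrM; field; rewrite nzn.
  rewrite e1 e2.
  field; apply/andP; split; first by rewrite nzn.
  by apply: expf_neq0; apply/negP => /eqP; lra.
rewrite (_ : Posz j.+1 - Posz k = Negz (k - j.+2)); last by rewrite NegzE; lia.
by rewrite mulr0 /= mulr0.
Qed.
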